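(* Let $n$ be a positive even integer and $m = n^2+1$. Let $Q_n = (a_{i,j})_{1\le i,j\le n}$ be the $n\times n$ matrix with entries in $\mathbb{Z}/m\mathbb{Z}$ given by $a_{i,j} = j + (i-1)n$, and let $\rho(Q_n)$ be the $n\times n$ matrix whose $(i,j)$ entry is $a_{j,n-i+1}$. Writing $\left(\frac{A}{m}\right)$ for the matrix obtained by applying the Jacobi symbol $\left(\frac{\cdot}{m}\right)$ to each entry of $A$, we have $$\left(\frac{\rho(Q_n)}{m}\right) = \begin{cases} \left(\frac{Q_n}{m}\right) & \text{if } n\equiv 0 \pmod 4,\\ -\left(\frac{Q_n}{m}\right) & \text{if } n\equiv 2\pmod 4.\end{cases}$$
   Context: For odd $m>2$ with prime factorization $m=\prod_{k=1}^K p_k$ (primes not necessarily distinct), the Jacobi symbol is $\left(\frac{a}{m}\right)=\prod_{k=1}^K \left(\frac{a}{p_k}\right)$, where $\left(\frac{a}{p}\right)$ is the Legendre symbol; it is well-defined on $\mathbb{Z}/m\mathbb{Z}$. *)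

(* Defs.v *)
From mathcomp Require Import all_boot all_order all_algebra.
Set Implicit Arguments. Unset Strict Implicit. Unset Printing Implicit Defensive.
Import GRing.Theory Num.Theory.
Local Open Scope ring_scope.

Definition legendre (a p : nat) : int :=
  if (p %| a)%N then 0
  else if [exists x : 'I_p, ((x * x) %% p == a %% p)%N] then 1 else -1.

Definition jacobi (a m : nat) : int :=
  \prod_(p <- primes m) legendre a p ^+ logn p m.

(* Q_n, 0-indexed: entry (i,j) is a_{i+1,j+1} = (j+1) + i*n
   (these are the canonical representatives in Z/(n^2+1)Z). *)
Definition Qmat (n : nat) : 'M[nat]_n := \matrix_(i < n, j < n) (j.+1 + i * n)%N.

(* rho(A)_{i,j} = a_{j, n-i+1}  (1-indexed), i.e. A j (rev_ord i) 0-indexed. *)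
Definition rho (T : Type) (n : nat) (A : 'M[T]_n) : 'M[T]_n :=
  \matrix_(i < n, j < n) A j (rev_ord i).

Definition jacobi_mx (n m : nat) (A : 'M[nat]_n) : 'M[int]_n :=
  map_mx (fun a => jacobi a m) A.

(* Main.v *)
Require Import Defs.
From mathcomp Require Import all_boot all_order all_algebra all_fingroup all_solvable all_field.
From mathcomp Require Import zify ring.
Import GRing.Theory Num.Theory.
Local Open Scope ring_scope.

Section Eu.
Variable p : nat.
Hypothesis pp : prime p.
Hypothesis podd : odd p.
Local Notation F := 'F_p.

Lemma Fp_natE a b : ((a%:R : F) == b%:R) = (a == b %[mod p])%N.
Proof.
apply/eqP/eqP => [H|H]; last by rewrite -(Fp_nat_mod pp a) H Fp_nat_mod.
by rewrite -(val_Fp_nat pp a) -(val_Fp_nat pp b) H.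
Qed.

Lemma Fp_natr (x : F) : ((val x)%:R : F) = x.
Proof. apply/val_inj; rewrite /= val_Fp_nat // modn_small //. apply: leq_trans (ltn_ord x) _; by rewrite Fp_cast. Qed.

Lemma Fp_neq_m1 : (-1 : F) != 1.
Proof.
apply/eqP => H. have : (2%:R : F) == 0%:R by rewrite -[2%N]/(1+1)%N natrD -{1}H addNr.
rewrite Fp_natE mod0n => /eqP H2.
have H3 : (p %| 2)%N by rewrite /dvdn H2.
have := dvdn_leq (isT : (0 < 2)%N) H3; move: podd pp; case: p => [|[|[|q]]] //.
Qed.

Lemma Fp_exp_card (x : F) : x != 0 -> x ^+ p.-1 = 1.
Proof.
move=> x0; have e : x ^+ p.-1.+1 = x by rewrite prednK ?prime_gt0 //; have := expf_card x; rewrite card_Fp.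
by apply: (mulfI x0); rewrite mulr1 -exprS.
Qed.

Lemma Fp_prim : exists z : F, (p.-1).-primitive_root z.
Proof.
have p1 : (0 < p.-1)%N. by move: podd; case: p pp => [|[|[|]]].
have H : has (p.-1).-primitive_root (enum [pred x : F | x != 0]).
  apply: has_prim_root => //.
  - apply/allP => x; rewrite mem_enum inE => x0. by rewrite unity_rootE Fp_exp_card.
  - exact: enum_uniq.
  - by rewrite -cardE cardC1 card_Fp.
by case/hasP: H => z _ Hz; exists z.
Qed.

Definition hh := (p.-1)./2.

Lemma p2E : p.-1 = (hh * 2)%N.
Proof. rewrite /hh muln2 even_halfK //. move: podd pp; case: p => // q /= oq _. Qed.

Lemma hh_gt0 : (0 < hh)%N.
Proof. rewrite /hh; move: podd pp; case: p => [|[|[|]]] //. Qed.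

Lemma euler_F (A : F) : A != 0 -> (exists y, y * y = A) <-> A ^+ hh = 1.
Proof.
have p2 := p2E. have h0 := hh_gt0.
move=> A0; split.
  case=> y yA; have y0 : y != 0 by apply: contraNneq A0 => y0; rewrite -yA y0 mul0r.
  by rewrite -yA -expr2 -exprM mulnC -p2 Fp_exp_card.
case: Fp_prim => z zp Ah.
have [[i ?] /= Ai] := prim_rootP zp (@Fp_exp_card A A0).
move: Ah; rewrite Ai -exprM => /eqP; rewrite -(prim_order_dvd zp) p2 mulnC dvdn_pmul2r //.
move=> /dvdnP [k ik]; exists (z ^+ k). by rewrite -exprD ik addnn -muln2.
Qed.



Lemma QR_F a : reflect (exists y : F, y * y = a%:R) [exists x : 'I_p, ((x * x) %% p == a %% p)%N].
Proof.
apply: (iffP existsP).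
  case=> x /eqP Hx; exists (val x)%:R; apply/eqP; by rewrite -natrM Fp_natE Hx.
case=> y Hy.
have yl : (val y < p)%N by apply: leq_trans (ltn_ord y) _; rewrite Fp_cast.
exists (Ordinal yl); rewrite /=. by rewrite -Fp_natE natrM Fp_natr Hy.
Qed.

Definition EE a := (a%:R : F) ^+ hh.

Lemma legendreE a : ~~ (p %| a)%N -> legendre a p = if EE a == 1 then 1 else -1.
Proof.
move=> pa; rewrite /legendre (negPf pa).
have A0 : (a%:R : F) != 0%:R by rewrite Fp_natE mod0n; apply: contra pa => /eqP H; rewrite /dvdn H.
case: QR_F => H; case: eqP => H2 //.
  by case: H2; exact: (proj1 (euler_F _ A0) H).
by case: H; exact: (proj2 (euler_F _ A0) H2).
Qed.

Lemma EE_pm a : ~~ (p %| a)%N -> (EE a == 1) || (EE a == -1).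
Proof.
move=> pa; have A0 : (a%:R : F) != 0%:R by rewrite Fp_natE mod0n; apply: contra pa => /eqP H; rewrite /dvdn H.
by rewrite -sqrf_eq1 /EE -exprM -p2E Fp_exp_card.
Qed.

Lemma legendreM a b : legendre (a * b) p = legendre a p * legendre b p.
Proof.
case pa: (p %| a)%N. by rewrite /legendre pa dvdn_mulr // mul0r.
case pb: (p %| b)%N. by rewrite /legendre pb dvdn_mull // mulr0.
have pab : ~~ (p %| a * b)%N by rewrite Euclid_dvdM // pa pb.
rewrite !legendreE ?pa ?pb // /EE natrM exprMn.
have := EE_pm _ (negbT pa); have := EE_pm _ (negbT pb); rewrite /EE.
have N1 := Fp_neq_m1.
by case/orP => /eqP -> ; case/orP => /eqP ->; rewrite ?mulr1 ?mul1r ?mulrNN ?mulr1 ?eqxx // ?(negPf N1).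
Qed.

Lemma legendre_mod a b : a = b %[mod p] -> legendre a p = legendre b p.
Proof. by move=> H; rewrite /legendre /dvdn H. Qed.

Lemma legendre_n n : (p %| n ^ 2 + 1)%N ->
  (p %% 4 = 1)%N /\ legendre n p = (-1) ^+ ((p.-1) %/ 4).
Proof.
move=> pm.
have pn : ~~ (p %| n)%N.
  apply/negP => pn; have : (p %| 1)%N by rewrite -(dvdn_addr 1 (@dvdn_exp 2%N _ _ isT pn)).
  by rewrite dvdn1 => /eqP p1; move: pp; rewrite p1.
have N2 : (n%:R : F) ^+ 2 = -1.
  have : ((n ^ 2 + 1)%:R : F) == 0%:R by rewrite Fp_natE mod0n; move: pm; rewrite /dvdn.
  by rewrite natrD natrX addr_eq0 => /eqP.
have Hh : (n%:R : F) ^+ (hh * 2) = 1.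
  rewrite -p2E Fp_exp_card //. rewrite -[0]/(0%:R) Fp_natE mod0n; apply: contra pn => /eqP H; by rewrite /dvdn H.
move: Hh; rewrite mulnC exprM N2 -[(-1 : F) ^+ hh]signr_odd.
case oh: (odd hh). by rewrite /= expr1 => /eqP; rewrite (negPf Fp_neq_m1).
move=> _.
have [j hj] : exists j, hh = (j * 2)%N by exists hh./2; rewrite muln2 even_halfK ?oh.
have p4 : (p = j * 4 + 1)%N.
  have := p2E; rewrite hj; move: pp; case: p => // q _ /= ->. lia.
have pj : (p.-1 %/ 4 = j)%N by rewrite p4 addn1 /= mulnK.
split; first by rewrite p4 modnMDl.
rewrite legendreE // /EE hj pj mulnC exprM N2 -[(-1 : F) ^+ j]signr_odd -[(-1 : int) ^+ j]signr_odd.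
case: (odd j); last by rewrite expr0 eqxx.
by rewrite !expr1 (negPf Fp_neq_m1).
Qed.
End Eu.

Definition s4 (x : nat) : int := (-1) ^+ ((x.-1) %/ 4).

Lemma s4M x y : (x %% 4 = 1)%N -> (y %% 4 = 1)%N ->
  ((x * y) %% 4 = 1)%N /\ s4 (x * y) = s4 x * s4 y.
Proof.
move=> hx hy.
rewrite (divn_eq x 4) (divn_eq y 4) hx hy.
set a := (x %/ 4)%N; set b := (y %/ 4)%N.
have E : ((a * 4 + 1) * (b * 4 + 1) = (a * b * 4 + a + b) * 4 + 1)%N by ring.
rewrite /s4 E modnMDl !addn1 /= !mulnK //; split => //.
rewrite -addnA exprD -[X in X * _ = _]signr_odd oddM andbF expr0 mul1r.
by rewrite exprD.
Qed.

Lemma s4X x e : (x %% 4 = 1)%N -> ((x ^ e) %% 4 = 1)%N /\ s4 (x ^ e) = s4 x ^+ e.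
Proof.
move=> hx; elim: e => [|e [IH1 IH2]]; first by rewrite expn0 expr0.
have [H1 H2] := s4M _ _ hx IH1.
by rewrite expnS exprS H1 H2 IH2.
Qed.

Lemma s4_prod (s : seq nat) (e : nat -> nat) : (forall q, q \in s -> q %% 4 = 1)%N ->
  ((\prod_(q <- s) q ^ e q) %% 4 = 1)%N /\
  \prod_(q <- s) s4 q ^+ e q = s4 (\prod_(q <- s) q ^ e q)%N.
Proof.
elim: s => [|q s IH] H; first by rewrite !big_nil.
have H' : forall r, r \in s -> (r %% 4 = 1)%N by move=> r hr; apply: H; rewrite inE hr orbT.
have [A1 A2] := IH H'.
have [B1 B2] := s4X _ (e q) (H q (mem_head _ _)).
have [C1 C2] := s4M _ _ B1 A1.
by rewrite !big_cons C1 C2 B2 A2.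
Qed.

Lemma prod_primes m : (0 < m)%N -> m = (\prod_(q <- primes m) q ^ logn q m)%N.
Proof. by move=> m0; rewrite {1}(prod_prime_decomp m0) prime_decompE big_map. Qed.

Lemma odd_div q m : odd m -> (q %| m)%N -> odd q.
Proof.
move=> om qm; apply: contraTT om; rewrite -!dvdn2 => H; exact: dvdn_trans H qm.
Qed.

Lemma jacobiM a b m : odd m -> jacobi (a * b) m = jacobi a m * jacobi b m.
Proof.
move=> om; rewrite /jacobi -big_split /=; apply: eq_big_seq => q.
rewrite mem_primes => /and3P [pq _ qm].
by rewrite (@legendreM q pq (odd_div _ _ om qm)) exprMn.
Qed.

Lemma jacobi_mod a b m : a = b %[mod m] -> jacobi a m = jacobi b m.
Proof.
move=> H; rewrite /jacobi; apply: eq_big_seq => q.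
rewrite mem_primes => /and3P [pq _ qm].
by rewrite (@legendre_mod q a b) // -(modn_dvdm a qm) H modn_dvdm.
Qed.

Lemma jacobi_n n : (0 < n)%N -> ~~ odd n ->
  jacobi n (n ^ 2).+1 = if (4 %| n)%N then 1 else -1.
Proof.
move=> n0 en; set m := (n ^ 2).+1.
have om : odd m by rewrite /m /= oddX /= (negPf en).
have -> : jacobi n m = \prod_(q <- primes m) s4 q ^+ logn q m.
  rewrite /jacobi; apply: eq_big_seq => q.
  rewrite mem_primes => /and3P [pq _ qm].
  have qm' : (q %| n ^ 2 + 1)%N by rewrite addn1.
  by have [_ ->] := @legendre_n q pq (odd_div _ _ om qm) n qm'.
have Hs : forall q, q \in primes m -> (q %% 4 = 1)%N.
  move=> q; rewrite mem_primes => /and3P [pq _ qm].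
  have qm' : (q %| n ^ 2 + 1)%N by rewrite addn1.
  by have [-> _] := @legendre_n q pq (odd_div _ _ om qm) n qm'.
have [_ ->] := @s4_prod (primes m) (logn^~ m) Hs.
rewrite -prod_primes // /s4 /m /=.
have [k nk] : exists k, n = (k * 2)%N by exists n./2; rewrite muln2 even_halfK.
have -> : ((n ^ 2) %/ 4 = k * k)%N by rewrite (_ : n ^ 2 = k * k * 4)%N ?mulnK // nk; ring.
rewrite -signr_odd oddM andbb nk.
have -> : (4 %| k * 2)%N = (2 %| k)%N by rewrite -[4%N]/(2 * 2)%N dvdn_pmul2r.
by rewrite dvdn2; case: (odd k).
Qed.

Theorem theorem3 (n : nat) (n_gt0 : (0 < n)%N) (n_even : ~~ odd n) :
  jacobi_mx (n ^ 2).+1 (rho (Qmat n)) =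
  (if (4 %| n)%N then jacobi_mx (n ^ 2).+1 (Qmat n)
   else - jacobi_mx (n ^ 2).+1 (Qmat n)).
Proof.
set m := (n ^ 2).+1.
have om : odd m by rewrite /m /= oddX /= (negPf n_even).
have E : forall i j : 'I_n, jacobi_mx m (rho (Qmat n)) i j =
   jacobi n m * jacobi_mx m (Qmat n) i j.
  move=> i j; rewrite !mxE -jacobiM // /=.
  apply: jacobi_mod.
  have hi := ltn_ord i.
  have -> : (n * (j.+1 + i * n) = i * m + ((n - i.+1).+1 + j * n))%N.
    rewrite /m. nia.
  by rewrite modnMDl.
apply/matrixP => i j.
rewrite jacobi_n // in E.
case: ifP => H; rewrite E H ?mul1r ?mulN1r //. by rewrite [RHS]mxE.
Qed.
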